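(* Let $q$ be a prime power and use the setting of the context. Then the code $\mathcal C=\bigcup_{i=0}^{q^2+q}\mathcal G_i$ is an orbit code: there is a subgroup of ${\rm PGL}(6,q)$ of order $(q^3-1)(q^2+q+1)$ leaving $\mathcal C$ invariant and acting transitively on its planes.
   Context: In ${\rm PG}(5,q)$ points are row vectors ${\bf X}=(X_1,\dots,X_6)$ with matrices acting on the right; write $X=(X_1,X_2,X_3)$, $Y=(X_4,X_5,X_6)$. Let $\pi_1$ be the plane $X_1=X_2=X_3=0$ and $\pi_2$ the plane $X_4=X_5=X_6=0$. Let $A$ be a Singer cycle of ${\rm GL}(3,q)$ (a $3\times3$ matrix of multiplicative order $q^3-1$). For $0\le i\le q^2+q$ let $\mathcal Q_i$ be the quadric with quadratic form $XA^iY^T$; each is a non-degenerate hyperbolic quadric containing $\pi_1,\pi_2$. Its planes fall into two classes (planes in the same class meet in one point), with $\pi_1,\pi_2$ in different classes. $\mathcal G_i$ is the set of the $q^3-1$ planes of $\mathcal Q_i$ in the class of $\pi_1$, distinct from $\pi_1$ and disjoint from $\pi_2$. An orbit code is a constant-dimension code admitting an automorphism group (a group of collineations preserving it) whose members form a single orbit under that group. *)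

(* Defs.v *)
From HB Require Import structures.
From mathcomp Require Import all_boot all_order all_algebra all_fingroup.
Set Implicit Arguments. Unset Strict Implicit. Unset Printing Implicit Defensive.
Import GRing.Theory.
Local Open Scope ring_scope.

(* PG(5,q) over a finite field F: vectors are row vectors 'rV[F]_(3+3),
   written (X,Y) with X = lsubmx, Y = rsubmx.  A subspace of F^6 is
   represented canonically by a square matrix equal to its own <<_>>%MS. *)

Section Defs.
Variable F : finFieldType.

Definition qF : nat := #|F|.

Definition singer_cycle (A : 'M[F]_3) : Prop :=
  A \in unitmx /\ A ^+ (qF ^ 3 - 1) = 1 /\
  (forall k : nat, (0 < k < qF ^ 3 - 1)%N -> A ^+ k != 1).

Definition is_plane (P : 'M[F]_(3 + 3)) : bool :=
  (P == <<P>>%MS) && (\rank P == 3)%N.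

Definition pi1 : 'M[F]_(3 + 3) := <<row_mx (0 : 'M[F]_3) 1%:M>>%MS.
Definition pi2 : 'M[F]_(3 + 3) := <<row_mx (1%:M : 'M[F]_3) 0>>%MS.

Definition qform (A : 'M[F]_3) (i : nat) (v : 'rV[F]_(3 + 3)) : F :=
  (lsubmx v *m (A ^+ i) *m (rsubmx v)^T) 0 0.

Definition plane_of_quadric (A : 'M[F]_3) (i : nat) (P : 'M[F]_(3 + 3)) : bool :=
  is_plane P && [forall v : 'rV[F]_(3 + 3), (v <= P)%MS ==> (qform A i v == 0)].

(* G_i : planes of Q_i in the class of pi1 (i.e. meeting pi1 in exactly one
   point, which also excludes pi1 itself) and disjoint from pi2. *)
Definition G_ (A : 'M[F]_3) (i : nat) : {set 'M[F]_(3 + 3)} :=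
  [set P | plane_of_quadric A i P
         & (\rank (P :&: pi1)%MS == 1)%N && (\rank (P :&: pi2)%MS == 0)%N].

Definition code (A : 'M[F]_3) : {set 'M[F]_(3 + 3)} :=
  \bigcup_(i < (qF ^ 2 + qF).+1) G_ A i.

Definition scalarsGL : {set {'GL_(3 + 3)[F]}} :=
  [set g : {'GL_(3 + 3)[F]} | is_scalar_mx (GLval g)].

Definition ZGL : {group {'GL_(3 + 3)[F]}} := (<<scalarsGL>>)%G.

Definition PGL : {set coset_of ZGL} := ([set: {'GL_(3 + 3)[F]}] / ZGL)%g.

(* the collineation induced by an element of PGL acting on subspaces
   (well defined since scalar matrices fix every subspace) *)
Definition pact (c : coset_of ZGL) (P : 'M[F]_(3 + 3)) : 'M[F]_(3 + 3) :=
  <<P *m GLval (repr c)>>%MS.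

End Defs.

(* Main.v *)
Require Import Defs.
From HB Require Import structures.
From mathcomp Require Import all_boot all_order all_algebra all_fingroup all_field.
From mathcomp Require Import zify ring.
Set Implicit Arguments. Unset Strict Implicit. Unset Printing Implicit Defensive.
Import GRing.Theory.
Local Open Scope ring_scope.


Section Singer.
Variable F : finFieldType.
Local Notation q := (qF F).
Variable B : 'M[F]_3.
Hypothesis sB : singer_cycle B.
Local Notation n := (q ^ 3 - 1)%N.

Lemma q_gt1 : (1 < q)%N.
Proof. rewrite /qF; apply/card_gt1P; exists 0, 1; split => //; by rewrite eq_sym oner_neq0. Qed.

Lemma n_gt0 : (0 < n)%N.
Proof.
have := q_gt1; move: q => k hk.
have : (2 ^ 3 <= k ^ 3)%N by rewrite leq_exp2r.
lia.
Qed.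

Lemma unitB : B \in unitmx. Proof. by case: sB. Qed.
Lemma unitBX k : B ^+ k \in unitmx. Proof. by rewrite unitmxE -unitmxE /= unitrX // unitB. Qed.
Lemma Bn : B ^+ n = 1. Proof. by case: sB => _ []. Qed.

Lemma BX1 k : (0 < k < n)%N -> B ^+ k != 1. Proof. by case: sB => _ [] _; apply. Qed.

Lemma BX_eq1 k : B ^+ k = 1 -> (n %| k)%N.
Proof.
move=> h; rewrite /dvdn; apply/negPn/negP => hk.
have := BX1 (k := k %% n); rewrite lt0n hk ltn_mod n_gt0 expr_mod ?h ?Bn //.
by rewrite eqxx => /(_ isT).
Qed.

Lemma BX_inj k l : (k < n)%N -> (l < n)%N -> B ^+ k = B ^+ l -> k = l.
Proof.
wlog kl : k l / (k <= l)%N.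
  by move=> W; case: (leqP k l) => [/W//|/ltnW /W h hk hl /esym /h ->].
move=> hk hl h; have : B ^+ (l - k) = 1.
  have hu : B ^+ k \is a GRing.unit := unitBX k.
  by apply: (mulIr hu); rewrite mul1r -exprD subnK.
move/BX_eq1 => hd; apply/eqP; rewrite eqn_leq kl /=.
move: hd; rewrite leqNgt; apply: contraL => lk.
have h1 : (0 < l - k)%N by rewrite subn_gt0.
have h2 : (l - k < n)%N by apply: leq_ltn_trans hl; exact: leq_subr.
by apply/negP => /(dvdn_leq h1); rewrite leqNgt h2.
Qed.

Local Notation d := (degree_mxminpoly B).
Local Notation Ad := (powers_mx B d).
Definition Sp := [set X : 'M[F]_3 | (X \in Ad)%MS].

Lemma d_le3 : (d <= 3)%N.
Proof.
have h := mxminpoly_dvd_char B.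
have := dvdp_leq _ h; rewrite size_char_poly size_mxminpoly; apply.
by rewrite monic_neq0 // char_poly_monic.
Qed.

Lemma card_Sp : (#|Sp| <= q ^ 3)%N.
Proof.
have sub : Sp \subset [set vec_mx (u *m Ad) | u : 'rV[F]_d].
  apply/subsetP => X; rewrite inE => /submxP [u hu].
  by apply/imsetP; exists u => //; rewrite -hu mxvecK.
apply: leq_trans (subset_leq_card sub) _.
apply: leq_trans (leq_imset_card _ _) _.
rewrite card_mx mul1n /qF leq_exp2l ?d_le3 //.
exact: q_gt1.
Qed.

Lemma BX_Sp k : B ^+ k \in Sp.
Proof. by rewrite inE; have := horner_mx_mem B ('X ^+ k); rewrite rmorphXn /= horner_mx_X. Qed.

Lemma scalar_Sp (a : F) : a%:M \in Sp.
Proof. by rewrite inE -scalemx1 linearZ /= scalemx_sub // minpoly_mx1. Qed.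

Lemma Sp_sub X Y : X \in Sp -> Y \in Sp -> X - Y \in Sp.
Proof. by rewrite !inE => hX hY; rewrite linearB /= addmx_sub ?eqmx_opp. Qed.

Lemma Sp_pow X : X \in Sp -> X != 0 -> exists2 r, (r < n)%N & X = B ^+ r.
Proof.
move=> hX nz.
pose T := [set B ^+ (val k) | k : 'I_n].
have cT : #|T| = n.
  rewrite card_imset ?card_ord // => k l /= h; apply: val_inj.
  exact: BX_inj (ltn_ord k) (ltn_ord l) h.
have sT : T \subset Sp :\ 0.
  apply/subsetP => Y /imsetP [k _ ->]; rewrite in_setD1 BX_Sp andbT.
  apply/eqP => h; have := unitBX k; rewrite h unitmxE det0 unitr0 //.
have h0 : (0 : 'M[F]_3) \in Sp by by have := scalar_Sp 0; rewrite raddf0.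
have hc : (#|Sp :\ (0%R : 'M[F]_3)| <= n)%N.
  have := card_Sp; rewrite (cardsD1 (0 : 'M[F]_3) Sp) h0 add1n => h.
  move: h; move: (q ^ 3)%N => Q; lia.
have eT : T = Sp :\ 0.
  apply/eqP; rewrite eqEcard sT /= cT //.
have : X \in T by rewrite eT in_setD1 nz hX.
case/imsetP => k _ ->; exists (val k) => //. exact: ltn_ord.
Qed.

Local Notation m := (q ^ 2 + q).+1.

Lemma n_eq : n = (m * (q - 1))%N.
Proof.
have := q_gt1; move: q => k hk.
rewrite !expnS expn0 !muln1; nia.
Qed.

Lemma mulmx_unit_eq0 (u : 'rV[F]_3) X : X \in unitmx -> u *m X = 0 -> u = 0.
Proof. by move=> hX h; rewrite -(mulmxK hX u) h mul0mx. Qed.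

Lemma orbit_inj (u : 'rV[F]_3) k l : u != 0 -> (k < n)%N -> (l < n)%N ->
  u *m B ^+ k = u *m B ^+ l -> k = l.
Proof.
wlog kl : k l / (k <= l)%N.
  by move=> W; case: (leqP k l) => [/W//|/ltnW /W h nz hk hl /esym /h ->].
move=> nz hk hl h; apply/eqP; rewrite eqn_leq kl /= leqNgt; apply/negP => lt.
have h1 : (0 < l - k < n)%N.
  by rewrite subn_gt0 lt /=; apply: leq_ltn_trans hl; exact: leq_subr.
have hS : B ^+ (l - k) - 1 \in Sp.
  by rewrite -(expr0 B) Sp_sub ?BX_Sp.
have nz' : B ^+ (l - k) - 1 != 0 by rewrite subr_eq0 BX1.
have [r _ er] := Sp_pow hS nz'.
have : u *m (B ^+ (l - k) - 1) *m B ^+ k = 0.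
  by rewrite mulmxBr mulmx1 mulmxBl -mulmxA mulmxE -exprD subnK ?h ?subrr // ltnW.
move/(mulmx_unit_eq0 (unitBX k)); rewrite er => /(mulmx_unit_eq0 (unitBX r)).
by move/eqP; rewrite (negbTE nz).
Qed.

Lemma sorbit_trans (u v : 'rV[F]_3) : u != 0 -> v != 0 ->
  exists c, u *m B ^+ c = v.
Proof.
move=> nu nv.
pose T := [set u *m B ^+ (val k) | k : 'I_n].
have cT : #|T| = n.
  rewrite card_imset ?card_ord // => k l /= h; apply: val_inj.
  exact: orbit_inj nu (ltn_ord k) (ltn_ord l) h.
have sT : T \subset [set~ (0%R : 'rV[F]_3)].
  apply/subsetP => Y /imsetP [k _ ->]; rewrite !inE.
  by apply/eqP => /(mulmx_unit_eq0 (unitBX k)) /eqP; rewrite (negbTE nu).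
have eT : T = [set~ (0%R : 'rV[F]_3)].
  apply/eqP; rewrite eqEcard sT /= cT cardsC1 card_mx mul1n /qF.
  by rewrite subn1.
have : v \in T by rewrite eT !inE.
by case/imsetP => k _ ->; exists (val k).
Qed.

Lemma unit_pow_neq0 (a : F) : a != 0 -> a ^+ (q - 1) = 1.
Proof.
move=> a0; have h := expf_card a; have hq := q_gt1; rewrite /qF in hq *.
have e : #|F| = (#|F| - 1).+1 by lia.
rewrite e exprS in h.
by apply: (mulfI a0); rewrite mulr1.
Qed.

Lemma scalar_exp (a : F) j : (a%:M : 'M[F]_3) ^+ j = (a ^+ j)%:M.
Proof.
elim: j => [|j IH]; first by rewrite !expr0.
by rewrite !exprS IH -mulmxE -scalar_mxM.
Qed.

Lemma scalar_neq0 k a : B ^+ k = a%:M -> a != 0.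
Proof.
by move=> ea; apply/eqP => a0; have := unitBX k; rewrite ea a0 unitmxE det_scalar expr0n /= unitr0.
Qed.

Lemma scalar_dvd k : is_scalar_mx (B ^+ k) -> (m %| k)%N.
Proof.
case/is_scalar_mxP => a ea.
have a0 := scalar_neq0 ea.
have : B ^+ (k * (q - 1)) = 1 by rewrite exprM ea scalar_exp unit_pow_neq0.
move/BX_eq1; rewrite n_eq dvdn_pmul2r //.
by have := q_gt1; rewrite subn_gt0.
Qed.

Lemma card_scal :
  #|[set k : 'I_n | is_scalar_mx (B ^+ k)]| = (q - 1)%N /\ is_scalar_mx (B ^+ m).
Proof.
set S := [set k : 'I_n | _].
set D := [set k : 'I_n | (m %| k)%N].
have SD : S \subset D by apply/subsetP => k; rewrite !inE; exact: scalar_dvd.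
have cD : (#|D| <= q - 1)%N.
  have lt_jm (j : 'I_(q - 1)) : (val j * m < n)%N.
    by rewrite n_eq mulnC ltn_mul2l /= ltn_ord.
  have : D \subset [set Ordinal (lt_jm j) | j : 'I_(q - 1)].
    apply/subsetP => k; rewrite inE => /dvdnP [j ej].
    have hj : (j < q - 1)%N.
      have := ltn_ord k; rewrite ej n_eq mulnC ltn_mul2l; by case/andP.
    apply/imsetP; exists (Ordinal hj) => //=; apply: val_inj; rewrite /= -ej //.
  move/subset_leq_card/leq_trans; apply; apply: leq_trans (leq_imset_card _ _) _.
  by rewrite card_ord.
have cS : (q - 1 <= #|S|)%N.
  have : [set~ (0 : F)] \subset [set (B ^+ (val k)) 0 0 | k in S].
    apply/subsetP => a; rewrite !inE => a0.
    have nz : (a%:M : 'M[F]_3) != 0.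
      by apply: contra a0 => /eqP /matrixP /(_ 0 0); rewrite !mxE /= mulr1n => ->.
    have [r hr er] := Sp_pow (scalar_Sp a) nz.
    apply/imsetP; exists (Ordinal hr); first by rewrite inE /= -er scalar_mx_is_scalar.
    by rewrite /= -er mxE.
  move/subset_leq_card => h1.
  rewrite cardsC1 in h1; rewrite /qF [(#|F| - 1)%N]subn1.
  apply: leq_trans h1 _; exact: leq_imset_card.
have eS : S = D by apply/eqP; rewrite eqEcard SD /= (leq_trans cD cS).
split; first by apply/eqP; rewrite eqn_leq (leq_trans (subset_leq_card SD) cD) cS.
have : (m <= n)%N by rewrite n_eq leq_pmulr // subn_gt0 q_gt1.
rewrite leq_eqVlt => /orP [/eqP ->| mn]; first by rewrite Bn scalar_mx_is_scalar.
have : Ordinal mn \in D by rewrite inE /=.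
by rewrite -eS inE.
Qed.

End Singer.


Section Alt.
Variable F : fieldType.

Definition i0 : 'I_3 := Ordinal (isT : (0 < 3)%N).
Definition i1 : 'I_3 := Ordinal (isT : (1 < 3)%N).
Definition i2 : 'I_3 := Ordinal (isT : (2 < 3)%N).

Lemma ord3P (i : 'I_3) : [\/ i = i0, i = i1 | i = i2].
Proof.
case: i => [[|[|[|k]]] h].
- by apply: Or31; apply: val_inj.
- by apply: Or32; apply: val_inj.
- by apply: Or33; apply: val_inj.
- by [].
Qed.

Lemma sum3 (f : 'I_3 -> F) : \sum_(k < 3) f k = f i0 + f i1 + f i2.
Proof.
rewrite !big_ord_recr big_ord0 /=.
have e0 : widen_ord (leqnSn 2) (widen_ord (leqnSn 1) ord_max) = i0 by apply: val_inj.
have e1 : widen_ord (leqnSn 2) ord_max = i1 by apply: val_inj.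
have e2 : (ord_max : 'I_3) = i2 by apply: val_inj.
rewrite e0 e1 e2; ring.
Qed.

Definition alt (t : 'rV[F]_3) : 'M[F]_3 :=
  \matrix_(i < 3, j < 3)
    (if val i == 0%N then (if val j == 1%N then t 0 i2 else if val j == 2%N then - t 0 i1 else 0)
     else if val i == 1%N then (if val j == 0%N then - t 0 i2 else if val j == 2%N then t 0 i0 else 0)
     else (if val j == 0%N then t 0 i1 else if val j == 1%N then - t 0 i0 else 0)).

Definition d3 (P : 'M[F]_3) : F :=
  P i0 i0 * (P i1 i1 * P i2 i2 - P i1 i2 * P i2 i1)
  - P i0 i1 * (P i1 i0 * P i2 i2 - P i1 i2 * P i2 i0)
  + P i0 i2 * (P i1 i0 * P i2 i1 - P i1 i1 * P i2 i0).

Lemma alt_conj (P : 'M[F]_3) (t : 'rV[F]_3) :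
  P *m alt (t *m P) *m P^T = d3 P *: alt t.
Proof.
apply/matrixP => i j.
rewrite /d3.
case: (ord3P i) => ->; case: (ord3P j) => -> /=; rewrite !(mxE, sum3) /=; ring.
Qed.


Definition row3 (a b c : F) : 'rV[F]_3 :=
  \row_(k < 3) (if val k == 0%N then a else if val k == 1%N then b else c).

Lemma qexpand (N : 'M[F]_3) a b c :
  (row3 a b c *m N *m (row3 a b c)^T) 0 0 =
  a * a * N i0 i0 + a * b * (N i0 i1 + N i1 i0) + a * c * (N i0 i2 + N i2 i0)
  + b * b * N i1 i1 + b * c * (N i1 i2 + N i2 i1) + c * c * N i2 i2.
Proof. rewrite !(mxE, sum3) /=; ring. Qed.

Lemma alternating (N : 'M[F]_3) :
  (forall y : 'rV[F]_3, (y *m N *m y^T) 0 0 = 0) ->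
  N = alt (row3 (N i1 i2) (N i2 i0) (N i0 i1)).
Proof.
move=> H.
have h00 : N i0 i0 = 0 by rewrite -(H (row3 1 0 0)) qexpand; ring.
have h11 : N i1 i1 = 0 by rewrite -(H (row3 0 1 0)) qexpand; ring.
have h22 : N i2 i2 = 0 by rewrite -(H (row3 0 0 1)) qexpand; ring.
have h01 : N i1 i0 = - N i0 i1.
  have e : N i1 i0 = N i1 i0 - (row3 1 1 0 *m N *m (row3 1 1 0)^T) 0 0 by rewrite H subr0.
  by rewrite e qexpand h00 h11; ring.
have h02 : N i2 i0 = - N i0 i2.
  have e : N i2 i0 = N i2 i0 - (row3 1 0 1 *m N *m (row3 1 0 1)^T) 0 0 by rewrite H subr0.
  by rewrite e qexpand h00 h22; ring.
have h12 : N i2 i1 = - N i1 i2.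
  have e : N i2 i1 = N i2 i1 - (row3 0 1 1 *m N *m (row3 0 1 1)^T) 0 0 by rewrite H subr0.
  by rewrite e qexpand h11 h22; ring.
apply/matrixP => i j.
case: (ord3P i) => ->; case: (ord3P j) => -> /=; rewrite !mxE /=;
  rewrite ?h00 ?h11 ?h22 ?h01 ?h02 ?h12 ?opprK //.
Qed.

Lemma alt_eq0 t : alt t = 0 -> t = 0.
Proof.
move/matrixP => h; apply/matrixP => i j.
have -> : i = 0 by apply: val_inj; case: i => [[]].
have := h i1 i2; have := h i2 i0; have := h i0 i1; rewrite !mxE /= => e2 e1 e0.
by case: (ord3P j) => ->.
Qed.

Lemma alt0 : alt 0 = 0.
Proof.
apply/matrixP => i j; rewrite !mxE.
by case: (ord3P i) => ->; case: (ord3P j) => -> /=; rewrite ?mxE ?oppr0.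
Qed.

Lemma alt_qform t (y : 'rV[F]_3) : (y *m alt t *m y^T) 0 0 = 0.
Proof. rewrite !(mxE, sum3) /=; ring. Qed.

End Alt.


Section Planes.
Variable F : finFieldType.
Implicit Types M : 'M[F]_3.

Definition W M : 'M[F]_(3, 3 + 3) := row_mx M 1%:M.

Lemma rank_W M : \rank (W M) = 3%N.
Proof.
apply/eqP; rewrite eqn_leq rank_leq_row /=.
have h : W M *m col_mx 0 1%:M = 1%:M by rewrite mul_row_col mulmx0 add0r mulmx1.
by rewrite -{1}(mxrank1 F 3) -{1}h mxrankM_maxl.
Qed.

Lemma rank_pi1 : \rank (pi1 F) = 3%N.
Proof. by rewrite /pi1 genmxE; have := rank_W 0. Qed.

Lemma rank_pi2 : \rank (pi2 F) = 3%N.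
Proof.
rewrite /pi2 genmxE; apply/eqP; rewrite eqn_leq rank_leq_row /=.
have h : row_mx (1%:M : 'M[F]_3) (0 : 'M[F]_3) *m col_mx (1%:M : 'M[F]_3) (0 : 'M[F]_3) = 1%:M by rewrite mul_row_col mulmx0 addr0 mulmx1.
by rewrite -{1}(mxrank1 F 3) -{1}h mxrankM_maxl.
Qed.

Lemma plane_struct (P : 'M[F]_(3 + 3)) : is_plane P -> \rank (P :&: pi2 F)%MS = 0%N ->
  exists M, P = <<W M>>%MS.
Proof.
case/andP => /eqP eP /eqP rP r0.
have hs := mxrank_sum_cap P (pi2 F); rewrite r0 rP rank_pi2 in hs.
have full : row_full (P + pi2 F)%MS by rewrite addn0 in hs; rewrite /row_full hs.
have : (row_mx (0 : 'M[F]_3) 1%:M <= P + pi2 F)%MS by exact: submx_full.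
case/sub_addsmxP => u eu.
have : (u.2 *m pi2 F <= row_mx (1%:M : 'M[F]_3) 0)%MS.
  by apply: submx_trans (submxMl _ _) _; rewrite /pi2 genmxE.
case/submxP => z ez; rewrite ez mul_mx_row mulmx1 mulmx0 in eu.
have eW : u.1 *m P = W (- z).
  by apply/(addIr (row_mx z 0)); rewrite -eu /W add_row_mx addNr addr0.
exists (- z); rewrite eP; apply/genmxP.
have sub : (W (- z) <= P)%MS by rewrite -eW submxMl.
have := geq_leqif (mxrank_leqif_sup sub); rewrite rank_W rP leqnn => h.
by apply/andP; split => //; rewrite -h.
Qed.


Lemma mulmx_unit_eq0' m (X : 'M[F]_(m, 3)) U : U \in unitmx -> X *m U = 0 -> X = 0.
Proof. by move=> hU h; rewrite -(mulmxK hU X) h mul0mx. Qed.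

Variable A : 'M[F]_3.
Hypothesis sA : singer_cycle A.

Lemma qform_W i M (y : 'rV[F]_3) :
  qform A i (y *m W M) = (y *m (M *m A ^+ i) *m y^T) 0 0.
Proof. by rewrite /qform /W mul_mx_row mulmx1 row_mxKl row_mxKr !mulmxA. Qed.

Lemma G_struct P i : P \in G_ A i ->
  exists M s, [/\ P = <<W M>>%MS, M *m A ^+ i = alt s & s != 0].
Proof.
rewrite inE => /andP [/andP [pl hq] /andP [r1 r0]].
have [M eP] := plane_struct pl (eqP r0).
have hN : forall y : 'rV[F]_3, (y *m (M *m A ^+ i) *m y^T) 0 0 = 0.
  move=> y; rewrite -qform_W; apply/eqP.
  have : (y *m W M <= P)%MS by rewrite eP genmxE submxMl.
  by move: y => y; apply: (implyP (forallP hq (y *m W M))).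
have eN := alternating hN.
exists M; eexists; split; [exact: eP | exact: eN |].
apply/eqP => s0; rewrite s0 alt0 in eN.
have M0 := mulmx_unit_eq0' (unitBX sA i) eN.
move: r1; rewrite eP M0.
have -> : (<<W 0>>%MS : 'M[F]_(3 + 3)) = pi1 F by [].
by rewrite (capmx_idPr (submx_refl (pi1 F))) rank_pi1.
Qed.

End Planes.


Lemma trmxX (F : fieldType) (B : 'M[F]_3) k : (B^T) ^+ k = (B ^+ k)^T.
Proof.
elim: k => [|k IH]; first by rewrite !expr0 trmx1.
by rewrite exprS exprSr IH -!mulmxE trmx_mul.
Qed.

Lemma singer_tr (F : finFieldType) (B : 'M[F]_3) : singer_cycle B -> singer_cycle B^T.
Proof.
case=> u [e h]; split; first by rewrite unitmx_tr.
split; first by rewrite trmxX e trmx1.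
move=> k hk; rewrite trmxX; apply: contra (h k hk) => /eqP e1.
by rewrite -(trmxK (B ^+ k)) e1 trmx1.
Qed.

Section Group.
Variable F : finFieldType.
Variable A : 'M[F]_3.
Hypothesis sA : singer_cycle A.
Local Notation q := (qF F).
Local Notation n := (q ^ 3 - 1)%N.
Local Notation m := (q ^ 2 + q).+1.

Definition gm (a c : nat) : 'M[F]_(3 + 3) := block_mx (A ^+ a) 0 0 ((A^T) ^+ c).

Lemma gm_unit a c : gm a c \in unitmx.
Proof.
rewrite unitmxE /gm det_ublock unitrM -!unitmxE.
by rewrite (unitBX sA) (unitBX (singer_tr sA)).
Qed.

Definition gel a c : {'GL_(3 + 3)[F]} := Sub (gm a c) (gm_unit a c).

Lemma gelE a c : GLval (gel a c) = gm a c. Proof. by []. Qed.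


Lemma gm_mul a c a' c' : gm a c *m gm a' c' = gm (a + a') (c + c').
Proof.
by rewrite /gm mulmx_block !mulmx0 !mul0mx !addr0 !add0r !mulmxE -!exprD.
Qed.

Lemma gm_mod a c : gm (a %% n) (c %% n) = gm a c.
Proof. by rewrite /gm !expr_mod ?(Bn sA) ?(Bn (singer_tr sA)). Qed.

Lemma gel_mul a c a' c' : (gel a c * gel a' c')%g = gel (a + a') (c + c').
Proof. by apply: val_inj; rewrite /= -gm_mul. Qed.

Lemma gel_mod a c : gel (a %% n) (c %% n) = gel a c.
Proof. by apply: val_inj; rewrite /= gm_mod. Qed.

Lemma gel0 : gel 0 0 = 1%g.
Proof. by apply: val_inj; rewrite /= /gm !expr0; exact: (esym (scalar_mx_block 3 3 1)). Qed.

Definition K : {set {'GL_(3 + 3)[F]}} :=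
  [set gel (val p.1) (val p.2) | p : 'I_n * 'I_n].

Lemma gel_K a c : gel a c \in K.
Proof.
rewrite -gel_mod; apply/imsetP.
have hn := n_gt0 F.
by exists (Ordinal (ltn_pmod a hn), Ordinal (ltn_pmod c hn)).
Qed.

Lemma K_group : group_set K.
Proof.
apply/group_setP; split; first by rewrite -gel0 gel_K.
move=> x y /imsetP [p _ ->] /imsetP [p' _ ->].
by rewrite gel_mul gel_K.
Qed.

Canonical K_grp := Group K_group.

Lemma gel_inj a c a' c' : (a < n)%N -> (c < n)%N -> (a' < n)%N -> (c' < n)%N ->
  gel a c = gel a' c' -> a = a' /\ c = c'.
Proof.
move=> ha hc ha' hc' /(congr1 GLval) e0.
have e : gm a c = gm a' c' by exact: e0.
rewrite /gm in e.
split.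
  by apply: (BX_inj sA) => //; have := congr1 ulsubmx e; rewrite !block_mxKul.
by apply: (BX_inj (singer_tr sA)) => //; have := congr1 drsubmx e; rewrite !block_mxKdr.
Qed.

Lemma card_K : #|K| = (n * n)%N.
Proof.
rewrite card_imset ?card_prod ?card_ord // => [[a c] [a' c']] /= e.
have [e1 e2] := gel_inj (ltn_ord a) (ltn_ord c) (ltn_ord a') (ltn_ord c') e.
by congr pair; apply: val_inj.
Qed.


Lemma scalars_group : group_set (scalarsGL F).
Proof.
apply/group_setP; split; first by rewrite inE /= scalar_mx_is_scalar.
move=> x y; rewrite !inE => /is_scalar_mxP [a ea] /is_scalar_mxP [b eb].
by apply/is_scalar_mxP; exists (a * b); rewrite GL_MxE ea eb -scalar_mxM.
Qed.

Lemma ZGLE : ZGL F = scalarsGL F :> {set _}.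
Proof. by rewrite /ZGL /= gen_set_id // scalars_group. Qed.

Lemma Z_scalar x : x \in ZGL F -> exists2 a : F, a != 0 & GLval x = a%:M.
Proof.
rewrite ZGLE inE => /is_scalar_mxP [a ea]; exists a => //.
apply/eqP => a0; have := GL_unitmx x; rewrite /= ea a0 unitmxE det_scalar expr0n /= unitr0 //.
Qed.

Lemma norm_Z : ([set: {'GL_(3 + 3)[F]}] \subset 'N(ZGL F))%g.
Proof.
apply: cents_norm; apply/centsP => x _ z /Z_scalar [a _ ea].
apply: val_inj; change (GLval (x * z)%g = GLval (z * x)%g); rewrite !GL_MxE ea; exact: scalar_mxC.
Qed.

Lemma card_KZ : #|K :&: ZGL F| = (q - 1)%N.
Proof.
have [cS _] := card_scal sA.
set S := [set k : 'I_n | _] in cS.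
have -> : K :&: ZGL F = [set gel (val k) (val k) | k in S].
  apply/setP => x; apply/idP/idP.
    case/setIP => /imsetP [[a c] _ ->] /Z_scalar [l _ el] /=.
    have e : gm a c = l%:M by exact: el.
    rewrite /gm scalar_mx_block in e.
    have ea := congr1 ulsubmx e; have ec := congr1 drsubmx e.
    rewrite !block_mxKul in ea; rewrite !block_mxKdr trmxX in ec.
    have ec' : A ^+ c = l%:M by rewrite -(trmxK (A ^+ c)) ec tr_scalar_mx.
    have eac : a = c by apply: val_inj; apply: (BX_inj sA (ltn_ord a) (ltn_ord c)); rewrite ea ec'.
    by subst c; apply/imsetP; exists a => //; rewrite inE ea scalar_mx_is_scalar.
  case/imsetP => k hk ->; move: hk; rewrite inE => /is_scalar_mxP [l el].
  rewrite inE gel_K /= ZGLE inE /= /gm trmxX el tr_scalar_mx -scalar_mx_block.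
  exact: scalar_mx_is_scalar.
rewrite card_in_imset // => k k' _ _ e.
by have [e1 _] := gel_inj (ltn_ord k) (ltn_ord k) (ltn_ord k') (ltn_ord k') e; apply: val_inj.
Qed.

Lemma card_KquoZ : #|(K_grp / ZGL F)%g| = (n * m)%N.
Proof.
rewrite card_quotient; last exact: subset_trans (subsetT _) norm_Z.
rewrite -indexgI.
have := Lagrange (subsetIl K_grp (ZGL F)).
rewrite card_KZ /= card_K {1}(n_eq F) -mulnA mulnCA => /eqP.
rewrite eqn_pmul2l; last by rewrite subn_gt0 q_gt1.
by move/eqP => ->; rewrite mulnC.
Qed.

End Group.


Section Main.
Variable F : finFieldType.
Local Notation q := (qF F).
Local Notation n := (q ^ 3 - 1)%N.
Local Notation m := (q ^ 2 + q).+1.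

Lemma pact_coset (x : {'GL_(3 + 3)[F]}) P :
  pact (coset (ZGL F) x) P = <<P *m GLval x>>%MS.
Proof.
rewrite /pact.
have := mem_repr_coset (coset (ZGL F) x).
rewrite val_coset; last by apply: (subsetP (norm_Z F)); rewrite inE.
case/rcosetP => z /Z_scalar [a a0 ea] ->.
rewrite GL_MxE ea mul_scalar_mx -scalemxAr.
exact: eq_genmx (eqmx_scale _ a0).
Qed.

Lemma rank_cap_mul (X V g : 'M[F]_(3 + 3)) : g \in unitmx -> (V *m g :=: V)%MS ->
  \rank (<<X *m g>> :&: V)%MS = \rank (X :&: V)%MS.
Proof.
move=> gu hV.
have h1 := mxrank_sum_cap <<X *m g>>%MS V; have h2 := mxrank_sum_cap X V.
have fg : row_free g by rewrite row_free_unit.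
have e1 : \rank <<X *m g>>%MS = \rank X by rewrite genmxE mxrankMfree.
have e2 : \rank (<<X *m g>> + V)%MS = \rank (X + V)%MS.
  rewrite (adds_eqmx (genmxE (X *m g)) (eqmx_sym hV)).
  by rewrite -(addsmxMr X V g) mxrankMfree.
rewrite e2 e1 in h1.
by apply/eqP; rewrite -(eqn_add2l (\rank (X + V)%MS)) h1 h2.
Qed.


Lemma shift_exists (e i M : nat) : (0 < M)%N -> (i < M)%N ->
  exists j t, (j < M)%N /\ (e + j = i + M * t)%N.
Proof.
move=> M0 hi.
case: (leqP e i) => hei.
  by exists (i - e)%N, 0%N; split; [lia | lia].
have := divn_eq (e - i) M; have := ltn_pmod (e - i) M0.
move: ((e - i) %/ M)%N ((e - i) %% M)%N => Q R hR eQ.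
case: (posnP R) => [R0|Rp].
  by exists 0%N, Q; split => //; subst R; nia.
by exists (M - R)%N, Q.+1; split; nia.
Qed.

Variable A : 'M[F]_3.
Hypothesis sA : singer_cycle A.

Lemma pi1_g a c : (pi1 F *m gm A a c :=: pi1 F)%MS.
Proof.
apply: eqmx_trans (eqmxMr _ (genmxE _)) _.
rewrite /gm mul_row_block ?mulmx0 ?mul0mx ?mul1mx ?addr0 ?add0r.
have -> : row_mx (0 : 'M[F]_3) ((A^T) ^+ c) = (A^T) ^+ c *m row_mx 0 1%:M.
  by rewrite mul_mx_row mulmx0 mulmx1.
apply: eqmx_trans (eqmxMfull _ _) (eqmx_sym (genmxE _)).
by rewrite row_full_unit (unitBX (singer_tr sA)).
Qed.

Lemma pi2_g a c : (pi2 F *m gm A a c :=: pi2 F)%MS.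
Proof.
apply: eqmx_trans (eqmxMr _ (genmxE _)) _.
rewrite /gm mul_row_block ?mulmx0 ?mul0mx ?mul1mx ?addr0 ?add0r.
have -> : row_mx (A ^+ a) (0 : 'M[F]_3) = A ^+ a *m row_mx 1%:M 0.
  by rewrite mul_mx_row mulmx0 mulmx1.
apply: eqmx_trans (eqmxMfull _ _) (eqmx_sym (genmxE _)).
by rewrite row_full_unit (unitBX sA).
Qed.

Lemma qform_gm j a c (w : 'rV[F]_(3 + 3)) :
  qform A j (w *m gm A a c) = (lsubmx w *m A ^+ (a + j + c) *m (rsubmx w)^T) 0 0.
Proof.
have -> : w *m gm A a c = row_mx (lsubmx w *m A ^+ a) (rsubmx w *m (A^T) ^+ c).
  by rewrite -{1}(hsubmxK w) /gm mul_row_block !mulmx0 !addr0 !add0r.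
rewrite /qform row_mxKl row_mxKr trmx_mul trmxX trmxK.
by rewrite !mulmxA -!(mulmxA (lsubmx w)) !mulmxE -!exprD.
Qed.


Lemma G_inv (i : 'I_m) a c P : P \in G_ A i ->
  exists j : 'I_m, <<P *m gm A a c>>%MS \in G_ A j.
Proof.
rewrite inE => /andP [/andP [/andP [/eqP eP /eqP rP] hq] /andP [r1 r0]].
have [j [t [hj ejt]]] := shift_exists (a + c) (ltn0Sn _) (ltn_ord i).
exists (Ordinal hj); rewrite inE.
have gu := gm_unit sA a c.
have [_ /is_scalar_mxP [mu emu]] := card_scal sA.
apply/andP; split; first (apply/andP; split).
- by rewrite /is_plane genmx_id eqxx /= genmxE mxrankMfree ?row_free_unit // rP.
- apply/forallP => v; apply/implyP; rewrite genmxE => /submxP [u ->].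
  rewrite mulmxA qform_gm /=.
  have -> : (a + j + c = i + m * t)%N by rewrite -ejt; lia.
  rewrite exprD exprM emu scalar_exp -mulmxE mul_mx_scalar -scalemxAr -scalemxAl mxE.
  have h := implyP (forallP hq (u *m P)) (submxMl _ _); rewrite /qform in h.
  by rewrite (eqP h) mulr0.
- by rewrite (rank_cap_mul _ gu (pi1_g a c)) (rank_cap_mul _ gu (pi2_g a c)) r1 r0.
Qed.


Lemma trans_mx i j M M' s s' : M *m A ^+ i = alt s -> M' *m A ^+ j = alt s' ->
  s != 0 -> s' != 0 -> exists a c, <<W M *m gm A a c>>%MS = <<W M'>>%MS.
Proof.
move=> eM eM' ns ns'.
have sT := singer_tr sA.
have [c ec] := sorbit_trans sT ns ns'.
set P := (A^T) ^+ c.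
have hc := alt_conj P s; rewrite ec {2}/P trmxX trmxK in hc.
set d := d3 P in hc.
have Pu : P \in unitmx := unitBX sT c.
have d0 : (d%:M : 'M[F]_3) != 0.
  apply/eqP => /matrixP /(_ 0 0); rewrite !mxE /= mulr1n => d0.
  move: hc; rewrite d0 scale0r => /(mulmx_unit_eq0' (unitBX sA c)).
  move=> h; have : alt s' = 0 by rewrite -(mulKmx Pu (alt s')) h mulmx0.
  by move/alt_eq0/eqP; rewrite (negbTE ns').
have [r _ er] := Sp_pow sA (scalar_Sp A d) d0.
set e := (j + c)%N.
exists (i + (r + n * e - e))%N, c.
have -> : W M *m gm A (i + (r + n * e - e)) c = P *m W M'.
  rewrite /W /gm mul_row_block mul_mx_row !mulmx0 !mulmx1 !mul1mx !addr0 !add0r.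
  congr row_mx.
  apply: (can_inj (mulmxK (unitBX sA e))).
  have ne : (e <= n * e)%N by rewrite leq_pmull // n_gt0.
  have eA : A ^+ (i + (r + n * e - e)) *m A ^+ e = A ^+ (i + (r + n * e - e) + e).
    by rewrite mulmxE -exprD.
  rewrite -mulmxA eA.
  have -> : (i + (r + n * e - e) + e = i + r + n * e)%N by lia.
  rewrite !exprD exprM (Bn sA) expr1n mulr1 -mulmxE mulmxA eM.
  rewrite mulmxA -(mulmxA P) eM' hc.
  by rewrite -er mul_mx_scalar.
apply: eq_genmx; apply: eqmxMfull; by rewrite row_full_unit.
Qed.

End Main.


Lemma pact_inj (F : finFieldType) (g P Q : 'M[F]_(3 + 3)) : g \in unitmx ->
  P = <<P>>%MS -> Q = <<Q>>%MS -> <<P *m g>>%MS = <<Q *m g>>%MS -> P = Q.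
Proof.
move=> gu eP eQ /genmxP h; rewrite eP eQ; apply/genmxP.
have := eqmxMr (invmx g) (eqmxP h); rewrite !mulmxK //.
by move/eqmxP.
Qed.

Lemma G_canon (F : finFieldType) (A : 'M[F]_3) i P : P \in G_ A i -> P = <<P>>%MS.
Proof. by rewrite inE => /andP [/andP [/andP [/eqP eP _] _] _]. Qed.

Theorem corollary4p9 (F : finFieldType) (A : 'M[F]_3) :
  singer_cycle A ->
  exists H : {group coset_of (ZGL F)},
    [/\ H \subset PGL F,
        #|H| = ((qF F ^ 3 - 1) * (qF F ^ 2 + qF F + 1))%N,
        (forall h, h \in H -> [set pact h P | P in code A] = code A)
      & (forall P Q, P \in code A -> Q \in code A ->
           exists2 h, h \in H & pact h P = Q)].
Proof.
move=> sA.
exists (K_grp sA / ZGL F)%G; split.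
- by rewrite /PGL; apply: quotientS; apply: subsetT.
- by rewrite card_KquoZ addn1.
- move=> h /morphimP [x _ xK ->].
  case/imsetP: xK => [[a c] _ ->] /=.
  set g := gm A a c.
  have -> : [set pact (coset (ZGL F) (gel sA a c)) P | P in code A] =
            [set <<P *m g>>%MS | P in code A].
    by apply: eq_imset => P; rewrite pact_coset.
  have sub : [set <<P *m g>>%MS | P in code A] \subset code A.
    apply/subsetP => Y /imsetP [P /bigcupP [i _ hP] ->].
    have [j hj] := G_inv sA a c hP.
    by apply/bigcupP; exists j.
  apply/eqP; rewrite eqEcard sub /= card_in_imset // => P Q.
  move=> /bigcupP [i _ hP] /bigcupP [j _ hQ].
  exact: pact_inj (gm_unit sA a c) (G_canon hP) (G_canon hQ).
- move=> P Q /bigcupP [i _ hP] /bigcupP [j _ hQ].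
  have [M [s [eP eM ns]]] := G_struct sA hP.
  have [M' [s' [eQ eM' ns']]] := G_struct sA hQ.
  have [a [c e]] := trans_mx sA eM eM' ns ns'.
  exists (coset (ZGL F) (gel sA a c)); first by apply: mem_quotient; exact: gel_K.
  rewrite pact_coset /= eP eQ -e.
  exact: eq_genmx (eqmxMr _ (genmxE _)).
Qed.
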